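(* For $n\ge1$ and even $h\ge0$, the number of unlabelled unicellular $n$-vertex maps in the orientable surface $\mathbf S_{h/2}$ is at most $2^{4n+3h}h^h$.
   Context: A map is a connected pseudograph (loops and multiple edges allowed) cellularly embedded in a surface, considered unlabelled and unrooted; it is unicellular if it has exactly one face. $\mathbf S_k$ is the orientable surface with $k$ handles (Euler genus $2k$). Convention $0^0=1$. *)

(* Defs.v *)
From mathcomp Require Import all_boot all_fingroup.
Set Implicit Arguments. Unset Strict Implicit. Unset Printing Implicit Defensive.

(* Orientable maps encoded as combinatorial maps (rotation systems) on the
   dart set 'I_(2m) (m = number of edges):
     a : fixed-point-free involution (the two darts of each edge),
     s : vertex rotation (its cycles are the vertices),
     a * s (x |-> s (a x)) : face permutation (its cycles are the faces). *)

Definition dart (m : nat) := 'I_(2 * m).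
Definition cmap (m : nat) := ({perm dart m} * {perm dart m})%type.

Definition is_cmap m (M : cmap m) : bool :=
  let: (a, s) := M in
  [&& [forall x, a x != x],
      [forall x, a (a x) == x] &
      (* connectedness: the group <a, s> acts transitively *)
      [forall x, forall y, connect (fun u v => (v == a u) || (v == s u)) x y]].

(* number of vertices / faces; the edgeless map (m = 0) is the one-vertex
   one-face map, hence the [maxn 1]. *)
Definition nverts m (M : cmap m) : nat := maxn 1 #|porbits M.2|.
Definition nfaces m (M : cmap m) : nat := maxn 1 #|porbits (M.1 * M.2)%g|.

(* The map lies in S_k (Euler genus 2k): V - E + F = 2 - 2k. *)
Definition in_surface (k : nat) m (M : cmap m) : bool :=
  nverts M + nfaces M + 2 * k == m + 2.

(* unlabelled maps: isomorphism classes under relabelling of darts *)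
Definition iso_class m (M : cmap m) : {set cmap m} :=
  [set ((M.1 ^ t)%g, (M.2 ^ t)%g) | t in [set: {perm dart m}]].

(* A unicellular map with n vertices in S_k has exactly n - 1 + 2k edges
   (Euler's formula), so this is the set of all of them. *)
Definition uni_edges (n k : nat) := (n - 1 + 2 * k)%N.

Definition num_unicellular (n k : nat) : nat :=
  #|[set iso_class M | M in
     [set M : cmap (uni_edges n k) |
        is_cmap M && (nverts M == n) && (nfaces M == 1%N)
        && in_surface k M ]]|.

(* Main.v *)
Require Import Defs.
From mathcomp Require Import all_boot all_fingroup.
From mathcomp Require Import zify.
Set Implicit Arguments. Unset Strict Implicit. Unset Printing Implicit Defensive.

Section Rank.
Variable N : nat.
Implicit Types (Y : {set 'I_N}).

Definition rk Y (x : 'I_N) : nat := #|[set y in Y | y < x]|.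

Lemma rk_lt Y y : y \in Y -> rk Y y < #|Y|.
Proof.
move=> yY; apply: proper_card; rewrite properE; apply/andP; split.
  by apply/subsetP=> z; rewrite inE => /andP[].
by apply/subsetPn; exists y => //; rewrite inE ltnn andbF.
Qed.

Lemma rk_lt_mono Y (x y : 'I_N) : x \in Y -> x < y -> rk Y x < rk Y y.
Proof.
move=> xY xy; apply: proper_card; rewrite properE; apply/andP; split.
  apply/subsetP=> z; rewrite !inE => /andP[-> /= zx]; exact: ltn_trans zx xy.
by apply/subsetPn; exists x; rewrite !inE ?xY ?xy // ltnn andbF.
Qed.

Lemma rk_inj Y : {in Y &, injective (rk Y)}.
Proof.
move=> x y xY yY e; apply/eqP; case: (ltngtP x y) => [xy|yx|/val_inj -> //].
  by have := rk_lt_mono xY xy; rewrite e ltnn.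
by have := rk_lt_mono yY yx; rewrite e ltnn.
Qed.

Lemma rk_surj Y k : k < #|Y| -> exists2 y, y \in Y & rk Y y = k.
Proof.
move=> kY.
pose f (y : 'I_N) : 'I_#|Y|.+1 := inord (rk Y y).
have fi : {in Y &, injective f}.
  move=> x y xY yY e; move: (congr1 (@nat_of_ord _) e); rewrite /f inordK; last by apply: ltnW; apply: rk_lt.
  rewrite inordK; last by apply: ltnW; apply: rk_lt.
  by move/(rk_inj xY yY).
have sub : f @: Y \subset [set~ ord_max].
  apply/subsetP=> _ /imsetP[y yY ->]; rewrite !inE; apply/eqP=> /(congr1 (@nat_of_ord _)).
  rewrite /f inordK /=; last by apply: ltnW; apply: rk_lt.
  by move=> e; have := rk_lt yY; rewrite e ltnn.
have eqS : f @: Y = [set~ ord_max].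
  apply/eqP; rewrite eqEcard sub /= cardsC1 card_ord /= card_in_imset //.
have : (inord k : 'I_#|Y|.+1) \in [set~ ord_max].
  rewrite !inE; apply/eqP=> /(congr1 (@nat_of_ord _)); rewrite /= inordK; last exact: ltnW.
  by move=> e; rewrite e ltnn in kY.
rewrite -eqS => /imsetP[y yY /(congr1 (@nat_of_ord _))]; rewrite /f !inordK; last 2 first.
- by apply: ltnW; apply: rk_lt.
- exact: ltnW.
by move=> e; exists y.
Qed.

Lemma mono_rk (f : 'I_N -> 'I_N) (B C : {set 'I_N}) :
  {in B &, forall x y : 'I_N, x < y -> f x < f y} -> f @: B = C ->
  {in B, forall b, rk C (f b) = rk B b}.
Proof.
move=> mono fBC b bB; rewrite /rk.
have -> : [set y in C | y < f b] = f @: [set y in B | y < b].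
  apply/setP=> y; apply/idP/idP.
    rewrite inE -fBC => /andP[/imsetP[x xB ->] fxb].
    apply/imsetP; exists x => //; rewrite inE xB /=.
    case: (ltngtP x b) => // [bx|/val_inj xb]; last by rewrite xb ltnn in fxb.
    by have := mono _ _ bB xB bx; rewrite ltnNge (ltnW fxb).
  case/imsetP=> x + ->; rewrite !inE => /andP[xB xb].
  by rewrite -fBC imset_f //= (mono _ _ xB bB xb).
apply: card_in_imset => x y; rewrite !inE => /andP[xB _] /andP[yB _] e.
apply/eqP; case: (ltngtP x y) => [xy|yx|/val_inj -> //].
  by have := mono _ _ xB yB xy; rewrite e ltnn.
by have := mono _ _ yB xB yx; rewrite e ltnn.
Qed.

Lemma card_openers (A : {perm 'I_N}) (X : {set 'I_N}) :
  (forall x, A (A x) = x) -> (forall x, A x != x) -> {in X, forall x, A x \in X} ->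
  (#|[set y in X | y < A y]| * 2 = #|X|)%N.
Proof.
move=> inv fpf cl.
rewrite -(cardsID [set y : 'I_N | y < A y] X).
have -> : X :&: [set y : 'I_N | y < A y] = [set y in X | y < A y].
  by apply/setP=> y; rewrite !inE.
have -> : X :\: [set y : 'I_N | y < A y] = A @: [set y in X | y < A y].
  apply/setP=> y; rewrite !inE; apply/idP/idP.
    case/andP=> ny yX; apply/imsetP; exists (A y); last by rewrite inv.
    rewrite inE cl //= inv ltn_neqAle leqNgt ny andbT; apply: contra (fpf y) => /eqP h; apply/eqP; exact: val_inj.
  case/imsetP=> x + ->; rewrite inE => /andP[xX xl].
  by rewrite inv -leqNgt (ltnW xl) cl.
rewrite card_imset; last exact: perm_inj. by rewrite muln2 addnn.
Qed.
End Rank.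

Section Match.
Variable N : nat.

Definition isB (B : {set 'I_N}) (k : nat) := [exists b in B, val b == k].
Definition blk (B : {set 'I_N}) (k : nat) := \max_(b in B | val b <= k) val b.

Definition opn (A : {perm 'I_N}) (X : {set 'I_N}) := [set y in X | y < A y].

Definition matchc (n h : nat) (A S : {perm 'I_N}) (X B : {set 'I_N})
   (g : {ffun 'I_h -> 'I_(2 * h)}) : bool :=
  [&& #|X| == 2 * h, #|B| == n.-1, B \subset ~: X & [&&
      [forall x, val (S x) == if (x.+1 < N) && ~~ isB B x.+1 then x.+1 else blk B x],
      [forall b in B, (A b \notin X) && (A b \notin B)],
      [forall b1 in B, forall b2 in B, (b1 < b2) ==> (A b1 < A b2)] & [&&
      [forall x in X, A x \in X],
      [forall o in X, (o < A o) ==>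
         [exists i : 'I_h, (val i == rk (opn A X) o) && (val (g i) == rk X (A o))]],
      [forall x, A (A x) == x] & [forall x, A x != x]]]].
Arguments matchc : clear implicits.

Lemma opn_sub n h A1 S1 A2 S2 X B g :
  matchc n h A1 S1 X B g -> matchc n h A2 S2 X B g -> opn A1 X \subset opn A2 X.
Proof.
case/and4P=> /eqP cX1 _ _ /and4P[_ _ _ /and4P[/forall_inP cl1 /forall_inP cg1 /forallP inv1 /forallP fpf1]].
case/and4P=> _ _ _ /and4P[_ _ _ /and4P[/forall_inP cl2 /forall_inP cg2 /forallP inv2 /forallP fpf2]].
have {}inv1 x : A1 (A1 x) = x by apply/eqP.
have {}inv2 x : A2 (A2 x) = x by apply/eqP.
have cO1 : #|opn A1 X| = h.
  by have := card_openers inv1 fpf1 cl1; rewrite cX1 /opn; lia.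
apply/subsetP=> y; rewrite !inE => /andP[yX y1]; rewrite yX /=.
rewrite ltnNge leq_eqVlt; apply/negP=> /orP[/eqP/val_inj e| lt2].
  by move: (fpf2 y); rewrite e eqxx.
set o := A2 y.
have oX : o \in X by apply: cl2.
have oO : o < A2 o by rewrite /o inv2.
have /existsP[i /andP[/eqP ei /eqP gi]] := implyP (cg2 o oX) oO.
have ih : val i < #|opn A1 X| by rewrite cO1; exact: ltn_ord.
have [o' o'O ro'] := rk_surj ih.
move: (o'O); rewrite inE => /andP[o'X o'l].
have /existsP[i' /andP[/eqP ei' /eqP gi']] := implyP (cg1 o' o'X) o'l.
have ii : i' = i by apply: val_inj; rewrite ei' ro'.
rewrite ii gi in gi'.
have e : A1 o' = y by apply: (rk_inj (cl1 _ o'X) yX); rewrite -gi' /o inv2.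
by move: y1 o'l; rewrite -e inv1 => a b; have := ltn_trans a b; rewrite ltnn.
Qed.

Lemma match_uniq n h A1 S1 A2 S2 X B g :
  N = (2 * n.-1 + 2 * h)%N ->
  matchc n h A1 S1 X B g -> matchc n h A2 S2 X B g -> A1 = A2 /\ S1 = S2.
Proof.
move=> eN m1 m2.
have O12 := opn_sub m1 m2; have O21 := opn_sub m2 m1.
have eO : opn A1 X = opn A2 X by apply/eqP; rewrite eqEsubset O12 O21.
move: m1 m2.
case/and4P=> /eqP cX /eqP cB sBX /and4P[/forallP S1c /forall_inP T1 /forall_inP M1 /and4P[/forall_inP cl1 /forall_inP cg1 /forallP inv1 /forallP fpf1]].
case/and4P=> _ _ _ /and4P[/forallP S2c /forall_inP T2 /forall_inP M2 /and4P[/forall_inP cl2 /forall_inP cg2 /forallP inv2 /forallP fpf2]].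
have {}inv1 x : A1 (A1 x) = x by apply/eqP.
have {}inv2 x : A2 (A2 x) = x by apply/eqP.
split; last first.
  by apply/permP=> x; apply: val_inj; rewrite (eqP (S1c x)) (eqP (S2c x)).
set C := ~: X :\: B.
have cC : #|C| = n.-1.
  rewrite cardsD (setIidPr sBX) cB.
  have := cardsC X; rewrite card_ord cX; lia.
have img (A : {perm 'I_N}) : {in B, forall b, (A b \notin X) && (A b \notin B)} -> A @: B = C.
  move=> TA; apply/eqP; rewrite eqEcard card_imset ?cB ?cC ?leqnn ?andbT; last exact: perm_inj.
  apply/subsetP=> _ /imsetP[b bB ->]; rewrite !inE.
  by case/andP: (TA b bB) => -> ->.
have mono (A : {perm 'I_N}) : (forall b1, b1 \in B -> [forall b2 in B, (b1 < b2) ==> (A b1 < A b2)]) ->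
    {in B &, forall x y : 'I_N, x < y -> A x < A y}.
  by move=> MA x y xB yB xy; have /forall_inP/(_ y yB)/implyP := MA x xB; apply.
have I1 := img _ T1; have I2 := img _ T2.
have onB : {in B, forall b, A1 b = A2 b}.
  move=> b bB.
  have r1 := mono_rk (mono _ M1) I1 bB.
  have r2 := mono_rk (mono _ M2) I2 bB.
  have c1 : A1 b \in C by rewrite -I1 imset_f.
  have c2 : A2 b \in C by rewrite -I2 imset_f.
  by apply: (rk_inj c1 c2); rewrite r1 r2.
apply/permP=> x.
case: (boolP (x \in B)) => xB; first exact: onB.
case: (boolP (x \in X)) => xX; last first.
  have : x \in C by rewrite !inE xB xX.
  rewrite -I1 => /imsetP[b bB ->].
  by rewrite inv1 (onB b bB) inv2.
have onO : {in opn A1 X, forall x, A1 x = A2 x}.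
  move=> y xO; have xO2 : y \in opn A2 X by rewrite -eO.
  move: xO xO2; rewrite !inE => /andP[xX' l1] /andP[_ l2].
  have /existsP[i1 /andP[/eqP e1 /eqP g1]] := implyP (cg1 y xX') l1.
  have /existsP[i2 /andP[/eqP e2 /eqP g2]] := implyP (cg2 y xX') l2.
  have ii : i1 = i2 by apply: val_inj; rewrite e1 e2 eO.
  by apply: (rk_inj (cl1 _ xX') (cl2 _ xX')); rewrite -g1 -g2 ii.
case: (boolP (x \in opn A1 X)) => xO; first exact: onO.
have yO : A1 x \in opn A1 X.
  rewrite inE cl1 //= inv1; move: xO; rewrite inE xX /= -leqNgt leq_eqVlt => /orP[/eqP/val_inj e|//].
  by move: (fpf1 x); rewrite e eqxx.
have := onO _ yO; rewrite inv1 => e.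
by rewrite {2}e inv2.
Qed.
End Match.

Section Count.
Variable N h : nat.

Definition Dset : {set {set 'I_N} * {set 'I_N}} :=
  [set p : {set 'I_N} * {set 'I_N} | (#|p.1| == 2 * h) && (p.2 \subset ~: p.1)].

Lemma card_sets : #|{set 'I_N}| = 2 ^ N.
Proof.
have -> : #|{set 'I_N}| = #|powerset [set: 'I_N]|.
  by apply: eq_card => A; rewrite !inE subsetT.
by rewrite card_powerset cardsT card_ord.
Qed.

Lemma card_Dset : #|Dset| <= 2 ^ N * 2 ^ (N - 2 * h).
Proof.
rewrite -sum1_card big_mkcond /=.
have -> : \sum_(p : {set 'I_N} * {set 'I_N}) (if p \in Dset then 1 else 0) =
   \sum_(X : {set 'I_N}) \sum_(B : {set 'I_N}) (if (X, B) \in Dset then 1 else 0).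
  by rewrite pair_bigA; apply: eq_bigr => -[X B].
apply: (@leq_trans (\sum_(X : {set 'I_N}) 2 ^ (N - 2 * h))); last first.
  by rewrite sum_nat_const card_sets.
apply: leq_sum => X _.
case: (boolP (#|X| == 2 * h)) => cX; last first.
  by rewrite big1 // => B _; rewrite inE /= (negbTE cX).
rewrite -big_mkcond /= sum1_card /=.
have -> : #|[pred B : {set 'I_N} | (X, B) \in Dset]| = #|powerset (~: X)|.
  by apply: eq_card => B; rewrite !inE /= cX.
rewrite card_powerset.
have e := cardsC X; rewrite card_ord (eqP cX) in e.
have -> : #|~: X| = N - 2 * h by lia.
by [].
Qed.
End Count.

Section Explore.
Variable T : finType.
Variables (a s : {perm T}).
Hypothesis inv : forall x, a (a x) = x.

Definition orb (r : T) := traject s r #|porbit s r|.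

Lemma orb_uniq r : uniq (orb r).
Proof. exact: uniq_traject_porbit. Qed.

Lemma mem_orb r y : (y \in orb r) = (y \in porbit s r).
Proof. by rewrite /orb -porbit_traject. Qed.

Lemma size_orb r : size (orb r) = #|porbit s r|.
Proof. by rewrite size_traject. Qed.

Lemma size_orb_gt0 r : 0 < size (orb r).
Proof. by rewrite size_orb lt0n card_porbit_neq0. Qed.

Lemma orb_head r : r \in orb r.
Proof. by rewrite mem_orb porbit_id. Qed.

Lemma index_orb_head r : index r (orb r) = 0.
Proof. by rewrite /orb; case: #|porbit s r| (card_porbit_neq0 s r) => //= n _; rewrite eqxx. Qed.

Lemma porbit_s r y : y \in porbit s r -> s y \in porbit s r.
Proof.
move=> yr; have /eqP <- : porbit s y == porbit s r by rewrite eq_porbit_mem.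
by have := mem_porbit s 1 y; rewrite expg1.
Qed.

Lemma orb_step r y : y \in orb r ->
  index (s y) (orb r) = if (index y (orb r)).+1 < size (orb r) then (index y (orb r)).+1 else 0.
Proof.
move=> yL; set j := index y (orb r).
have jl : j < size (orb r) by rewrite index_mem.
have ey : y = iter j s r.
  by rewrite -{1}(nth_index r yL) -/j /orb nth_traject // -size_orb.
have esy : s y = iter j.+1 s r by rewrite ey.
case: ifP => jd.
  have -> : s y = nth r (orb r) j.+1 by rewrite esy /orb nth_traject // -size_orb.
  by rewrite index_uniq ?orb_uniq.
have ej : j.+1 = #|porbit s r| by rewrite -size_orb; lia.
by rewrite esy ej iter_porbit index_orb_head.
Qed.

Lemma closed_porbit (P : seq T) x y : {in P, forall z, s z \in P} ->
  x \in P -> y \in porbit s x -> y \in P.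
Proof.
move=> cl xP /porbitP[i ->]; elim: i => [|i IH]; first by rewrite expg0 perm1.
by rewrite expgSr permM; apply: cl.
Qed.

Variable x0 : T.

Definition blkInv (P : seq T) (BS : seq nat) :=
  forall x, x \in P ->
  if ((index x P).+1 < size P) && ((index x P).+1 \notin BS)
  then index (s x) P = (index x P).+1
  else [/\ (index (s x) P == 0) || (index (s x) P \in BS), index (s x) P <= index x P &
        forall b, b \in BS -> index (s x) P < b -> index x P < b].

Record Inv (P : seq T) (BS : seq nat) (q : nat) : Prop := {
  iU : uniq P;
  iC : {in P, forall x, s x \in P};
  iB : forall b, b \in BS -> 0 < b < size P;
  iBU : uniq BS;
  iBlk : blkInv P BS;
  iT1 : forall b, b \in BS -> index (a (nth x0 P b)) P < b;
  iT2 : forall b1 b2, b1 \in BS -> b2 \in BS -> b1 < b2 ->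
          index (a (nth x0 P b1)) P < index (a (nth x0 P b2)) P;
  iQ1 : forall x, x \in P -> index x P < q -> a x \in P;
  iQ2 : forall b, b \in BS -> index (a (nth x0 P b)) P < q;
  iO : #|porbit s @: [set x in P]| = (size BS).+1 }.

Lemma Inv_init r : Inv (orb r) [::] 0.
Proof.
split => //.
- exact: orb_uniq.
- by move=> x; rewrite !mem_orb; apply: porbit_s.
- move=> x xL; have := orb_step xL; rewrite /= andbT.
  case: ifP => // _ ->; split => //.
- suff -> : porbit s @: [set x in orb r] = [set porbit s r] by rewrite cards1.
  apply/setP=> O; rewrite inE; apply/imsetP/eqP => [[x]|->].
    by rewrite inE mem_orb => xr ->; apply/eqP; rewrite eq_porbit_mem.
  by exists r; rewrite // inE orb_head.
Qed.

Lemma Inv_step P BS q : Inv P BS q -> has (fun x => a x \notin P) P ->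
  exists P' BS' q', Inv P' BS' q' /\ size P < size P' /\ {subset P <= P'}.
Proof.
move=> I hasP.
set ip := find (fun x => a x \notin P) P.
set p := nth x0 P ip.
have ipl : ip < size P by rewrite -has_find.
have pP : p \in P by apply: mem_nth.
have ap : a p \notin P by apply: (nth_find x0 hasP).
have bef : forall i, i < ip -> a (nth x0 P i) \in P.
  by move=> i /(before_find x0) /negbFE.
have ipx : index p P = ip by rewrite index_uniq // (iU I).
have qip : q <= ip.
  rewrite leqNgt; apply/negP=> lt; move: ap; rewrite (iQ1 I pP) // ipx //.
set r := a p; set L := orb r.
have rP : r \notin P by [].
have ar : a r = p by rewrite /r inv.
have disj : forall y, y \in L -> y \notin P.
  move=> y; rewrite mem_orb porbit_sym => ry; apply/negP=> yP.
  by move: rP; rewrite (closed_porbit (iC I) yP ry).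
have idxP : forall y, y \in P -> index y (P ++ L) = index y P.
  by move=> y yP; rewrite index_cat yP.
have idxL : forall y, y \in L -> index y (P ++ L) = size P + index y L.
  by move=> y yL; rewrite index_cat (negbTE (disj y yL)).
have nthP : forall b, b < size P -> nth x0 (P ++ L) b = nth x0 P b.
  by move=> b bl; rewrite nth_cat bl.
have nthr : nth x0 (P ++ L) (size P) = r.
  rewrite nth_cat ltnn subnn -(index_orb_head r) nth_index //; exact: orb_head.
have sL : 0 < size L by apply: size_orb_gt0.
have BSlt : forall b, b \in BS -> b < size P by move=> b /(iB I)/andP[].
have memP' : forall y, (y \in P ++ L) = (y \in P) || (y \in L) by move=> y; rewrite mem_cat.
have aPb : forall b, b \in BS -> a (nth x0 P b) \in P.
  move=> b bB; rewrite -index_mem; apply: ltn_trans (iT1 I bB) (BSlt _ bB).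
exists (P ++ L), (rcons BS (size P)), ip.+1; split; last first.
  by split; [rewrite size_cat; lia | move=> y yP; rewrite mem_cat yP].
split.
- rewrite cat_uniq (iU I) orb_uniq andbT /=; apply/hasPn=> y yL; exact: disj.
- move=> x; rewrite !memP' => /orP[xP|xL]; first by rewrite (iC I).
  by move: xL; rewrite !mem_orb => /porbit_s ->; rewrite orbT.
- move=> b; rewrite mem_rcons inE size_cat; case/orP => [/eqP->|bB]; first by lia.
  by have := iB I bB; lia.
- rewrite rcons_uniq (iBU I) andbT; by apply/negP=> /BSlt; rewrite ltnn.
- move=> x; rewrite memP' => /orP[xP|xL].
    have Old := iBlk I xP.
    have sxP : s x \in P by apply: (iC I).
    rewrite !idxP // size_cat mem_rcons inE.
    have il : index x P < size P by rewrite index_mem.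
    case: (boolP (((index x P).+1 < size P) && ((index x P).+1 \notin BS))) => c.
      rewrite c in Old; case/andP: c => c1 c2; rewrite (negbTE c2) orbF.
      have -> : ((index x P).+1 == size P) = false by apply/eqP; lia.
      by rewrite ltn_addr //=.
    rewrite (negbTE c) in Old.
    have -> : ((index x P).+1 < size P + size L) && ~~ (((index x P).+1 == size P) || ((index x P).+1 \in BS)) = false.
      apply/negP=> /andP[_]; rewrite negb_or => /andP[/eqP ne nB].
      by move: c; rewrite nB andbT; apply/negP/negPn; lia.
    case: Old => j0 ji jb; split => //.
      by rewrite mem_rcons inE; case/orP: j0 => ->; rewrite ?orbT.
    move=> b; rewrite mem_rcons inE; case/orP => [/eqP->|bB] //.
    exact: jb.
  have sxL : s x \in L by move: xL; rewrite !mem_orb => /porbit_s.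
  have st := orb_step xL; rewrite -/L in st.
  rewrite !idxL // st size_cat mem_rcons inE.
  have kl : index x L < size L by rewrite index_mem.
  case: (boolP ((index x L).+1 < size L)) => c.
    have -> : ((size P + index x L).+1 == size P) = false by apply/eqP; lia.
    have -> : (size P + index x L).+1 \in BS = false.
      by apply/negP=> /BSlt; lia.
    by rewrite /= -addnS ltn_add2l c.

  have -> : (size P + index x L).+1 < size P + size L = false by lia.
  rewrite /= addn0; split => //.
  + by rewrite mem_rcons inE eqxx orbT.
  + by lia.
  + move=> b; rewrite mem_rcons inE; case/orP => [/eqP->|bB]; first by rewrite ltnn.
    by move/BSlt: bB; lia.
- move=> b; rewrite mem_rcons inE; case/orP => [/eqP->|bB].
    by rewrite nthr ar idxP // ipx.
  by rewrite nthP ?BSlt // idxP ?aPb // (iT1 I).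
- move=> b1 b2; rewrite !mem_rcons !inE => /orP[/eqP->|b1B] /orP[/eqP->|b2B] //.
  + by rewrite ltnn.
  + by move=> lt; have := BSlt _ b2B; lia.
  + move=> _; rewrite nthr ar nthP ?BSlt // !idxP ?aPb // ipx.
    by apply: leq_trans (iQ2 I b1B) qip.
  + by move=> lt; rewrite !nthP ?BSlt // !idxP ?aPb // (iT2 I).
- move=> x; rewrite memP' => /orP[xP|xL]; last first.
    by rewrite idxL //; lia.
  rewrite idxP // ltnS leq_eqVlt => /orP[/eqP e|lt].
    have -> : x = p by rewrite -(nth_index x0 xP) e.
    by rewrite memP' /r orb_head orbT.
  by rewrite memP'; have := bef _ lt; rewrite nth_index // => ->.
- move=> b; rewrite mem_rcons inE; case/orP => [/eqP->|bB].
    by rewrite nthr ar idxP // ipx.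
  rewrite nthP ?BSlt // idxP ?aPb //; apply: leq_trans (iQ2 I bB) _; lia.
- have -> : [set x in P ++ L] = [set x in P] :|: [set x in L].
    by apply/setP=> y; rewrite !inE memP'.
  rewrite imsetU.
  have -> : porbit s @: [set x in L] = [set porbit s r].
    apply/setP=> O; rewrite inE; apply/imsetP/eqP => [[x]|->].
      by rewrite inE mem_orb => xr ->; apply/eqP; rewrite eq_porbit_mem.
    by exists r; rewrite // inE orb_head.
  rewrite setUC cardsU1 (iO I) size_rcons.
  suff -> : porbit s r \notin porbit s @: [set x in P] by [].
  apply/imsetP=> -[x]; rewrite inE => xP e.
  by move: rP; rewrite (closed_porbit (iC I) xP) // -e porbit_id.
Qed.

Lemma closed_connect2 (P : seq T) x y :
  {in P, forall z, s z \in P} -> {in P, forall z, a z \in P} ->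
  x \in P -> connect (fun u v => (v == a u) || (v == s u)) x y -> y \in P.
Proof.
move=> cs ca xP /connectP[p pth ->]; elim: p x xP pth => //= z p IH x xP /andP[e pth].
apply: IH pth; case/orP: e => /eqP ->; [exact: ca | exact: cs].
Qed.

Lemma explore (r : T) :
  (forall x y, connect (fun u v => (v == a u) || (v == s u)) x y) ->
  exists P BS q, Inv P BS q /\ (forall y, y \in P).
Proof.
move=> conn.
suff : forall k P BS q, Inv P BS q -> r \in P -> #|T| - size P <= k ->
    exists P BS q, Inv P BS q /\ (forall y, y \in P).
  by move=> /(_ #|T| _ _ _ (Inv_init r) (orb_head r)); apply; apply: leq_subr.
have closed P BS q : Inv P BS q -> r \in P -> ~~ has (fun x => a x \notin P) P ->
    exists P BS q, Inv P BS q /\ (forall y, y \in P).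
  move=> I rP hP; exists P, BS, q; split => // y.
  apply: (closed_connect2 (iC I) _ rP (conn r y)).
  by move=> z zP; have := hasPn hP z zP; rewrite negbK.
elim=> [|k IH] P BS q I rP kP;
  (case: (boolP (has (fun x => a x \notin P) P)) => hP; last exact: closed I rP hP);
  have [P' [BS' [q' [I' [lt sub]]]]] := Inv_step I hP;
  have le' : size P' <= #|T| by rewrite -(card_uniqP (iU I')) max_card.
  by lia.
by apply: (IH P' BS' q' I'); [exact: sub | lia].
Qed.
End Explore.
Section Translate.
Variable N : nat.
Variables (BS : seq nat).
Hypothesis BSlt : forall b, b \in BS -> b < N.
Hypothesis BSu : uniq BS.

Definition Bof : {set 'I_N} := [set i : 'I_N | val i \in BS].

Lemma card_Bof : #|Bof| = size BS.
Proof.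
have -> : #|Bof| = #|pmap (insub : nat -> option 'I_N) BS|.
  by apply: eq_card => i; rewrite inE mem_pmap_sub.
rewrite (card_uniqP (pmap_sub_uniq _ BSu)) size_pmap_sub.
by apply/eqP; rewrite -all_count; apply/allP=> b /BSlt.
Qed.

Lemma isB_Bof k : k < N -> isB Bof k = (k \in BS).
Proof.
move=> kN; apply/existsP/idP => [[b /andP[bB /eqP <-]]|kB].
  by move: bB; rewrite inE.
by exists (Ordinal kN); rewrite inE kB eqxx.
Qed.

Lemma blk_char (i j : nat) : (j == 0) || (j \in BS) -> j <= i ->
  (forall b, b \in BS -> j < b -> i < b) -> blk Bof i = j.
Proof.
move=> j0 ji jb; apply/eqP; rewrite eqn_leq; apply/andP; split.
  apply/bigmax_leqP => b; rewrite inE => /andP[bB bi].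
  rewrite leqNgt; apply/negP=> jb2; have := jb _ bB jb2. by rewrite ltnNge bi.
case/orP: j0 => [/eqP -> //|jB].
have jN := BSlt jB.
by apply: (@leq_bigmax_cond _ _ (fun b : 'I_N => val b) (Ordinal jN)); rewrite inE jB ji.
Qed.
End Translate.

Lemma translate (N n h : nat) (a s : {perm 'I_N}) (x0 : 'I_N) P BS q :
  (forall x, a (a x) = x) -> (forall x, a x != x) ->
  Inv a s x0 P BS q -> (forall y, y \in P) ->
  n = (size BS).+1 -> N = 2 * n.-1 + 2 * h ->
  exists t : {perm 'I_N}, exists X B (g : {ffun 'I_h -> 'I_(2 * h)}),
    @matchc N n h (a ^ t)%g (s ^ t)%g X B g.
Proof.
move=> inv fpf I full en eN.
have sP : size P = N.
  rewrite -(card_uniqP (iU I)); transitivity #|'I_N|; last exact: card_ord.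
  by apply: eq_card => y; rewrite full.

have idx y : index y P < N by move: (full y); rewrite -index_mem sP.
pose lab y : 'I_N := insubd y (index y P).
have vlab y : val (lab y) = index y P by rewrite val_insubd idx.
have labI : injective lab.
  move=> y z /(congr1 (@nat_of_ord _)); rewrite !vlab => e.
  by rewrite -(nth_index x0 (full y)) e nth_index.
pose t := perm labI.
have vt y : val (t y) = index y P by rewrite permE vlab.
have tn (i : 'I_N) : t (nth x0 P i) = i.
  by apply: val_inj; rewrite vt index_uniq ?(iU I) ?sP.
set A := (a ^ t)%g; set S := (s ^ t)%g.
have AJ y : A (t y) = t (a y) by rewrite permJ.
have SJ y : S (t y) = t (s y) by rewrite permJ.
have BSlt : forall b, b \in BS -> b < N by move=> b /(iB I)/andP[_]; rewrite sP.
set B := Bof N BS.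
have BSu := iBU I.
have cB : #|B| = size BS by apply: card_Bof.
have Ainv x : A (A x) = x by rewrite -(tn x) !AJ inv.
have Afpf x : A x != x.
  by rewrite -(tn x) AJ (inj_eq (@perm_inj _ t)) fpf.
have AB b : b \in B -> (val (A b) < val b) /\ (A b \notin B).
  rewrite inE => bB; rewrite -{1 3}(tn b) AJ vt; split; first exact: (iT1 I bB).
  rewrite inE vt; apply/negP=> b'B.
  have := iT1 I b'B; rewrite nth_index ?full // inv (index_uniq _ _ (iU I)) ?sP //.
  by move=> h1; have h2 := iT1 I bB; have := ltn_trans h1 h2; rewrite ltnn.
have vA b : val (A b) = index (a (nth x0 P b)) P by rewrite -{1}(tn b) AJ vt.
set X := ~: (B :|: A @: B).
have dBA : [disjoint B & A @: B].
  apply/pred0P=> x /=; apply/negP=> /andP[xB /imsetP[b bB e]].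
  by case: (AB b bB) => _; rewrite -e xB.
have cX : #|X| = 2 * h.
  have := cardsC (B :|: A @: B); rewrite card_ord.
  rewrite cardsU (disjoint_setI0 dBA) cards0 subn0 card_imset; last exact: perm_inj.
  rewrite cB -/X; lia.
have clX x : x \in X -> A x \in X.
  rewrite !in_setC !in_setU !negb_or => /andP[xB xAB]; apply/andP; split.
    by apply: contra xAB => AxB; rewrite -[x]Ainv imset_f.
  by apply: contra xB => /imsetP[b bB /perm_inj ->].
set O := opn A X.
have cO : #|O| = h.
  have := card_openers Ainv Afpf clX; rewrite cX -[[set y in X | y < A y]]/(opn A X) -/O; lia.
have hle : h <= 2 * h by lia.
pose g : {ffun 'I_h -> 'I_(2 * h)} := [ffun i : 'I_h =>
   insubd (widen_ord hle i) (rk X (A (odflt x0 [pick o in O | rk O o == i]))) ].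
exists t, X, B, g.
apply/and4P; split; [by rewrite cX | by rewrite cB en | by rewrite setCK subsetUl | apply/and4P; split].
- apply/forallP=> x; rewrite -(tn x) SJ !vt.
  set y := nth x0 P x.
  have Old := iBlk I (full y); rewrite sP in Old.
  case: (ltnP (index y P).+1 N) => c.
    rewrite (@isB_Bof N BS _ c) /=; move: Old; rewrite c /=.
    case: ifP => _; first by move=> ->.
    by case=> j0 ji jb; apply/eqP; symmetry; apply: (@blk_char N BS BSlt).
  have c' : ((index y P).+1 < N) = false by apply/negP; lia.
  move: Old; rewrite c' /= => -[j0 ji jb].
  by apply/eqP; symmetry; apply: (@blk_char N BS BSlt).
- apply/forall_inP=> b bB; case: (AB b bB) => _ ->; rewrite andbT !inE imset_f //.
  by rewrite orbT.
- apply/forall_inP=> b1 b1B; apply/forall_inP=> b2 b2B; apply/implyP=> lt.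
  rewrite !vA; apply: (iT2 I); by [move: b1B; rewrite inE | move: b2B; rewrite inE | ].
- apply/and4P; split.
  + by apply/forall_inP.
  + apply/forall_inP=> o oX; apply/implyP=> oA.
    have oO : o \in O by rewrite inE oX oA.
    have rl : rk O o < h by rewrite -cO rk_lt.
    apply/existsP; exists (Ordinal rl); rewrite eqxx /= /g ffunE.
    case: pickP => [o' /andP[o'O /eqP e]|no]; last first.
      by have := no o; rewrite oO eqxx.
    have eo : o' = o by apply: (rk_inj o'O oO); rewrite e.
    rewrite eo val_insubd.
    have AoX : A o \in X by apply: clX.
    have lt2 : rk X (A o) < 2 * h by rewrite -cX rk_lt.
    by rewrite /= lt2.
  + by apply/forallP=> x; rewrite Ainv.
  + by apply/forallP.
Qed.

Lemma iso_conj m (M : cmap m) (t : {perm dart m}) :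
  iso_class ((M.1 ^ t)%g, (M.2 ^ t)%g) = iso_class M.
Proof.
apply/setP=> y; apply/imsetP/imsetP => -[u _ ->] /=.
  by exists (t * u)%g; rewrite ?inE // !conjgM.
by exists (t^-1 * u)%g; rewrite ?inE // -!conjgM mulKVg.
Qed.

Lemma main_bound (m n h : nat) : 1 <= n -> m = (n.-1 + h)%N ->
  #|[set iso_class M | M in [set M : cmap m | is_cmap M && (nverts M == n)]]|
    <= 2 ^ (4 * n + 3 * h) * h ^ h.
Proof.
move=> n1 em.
set V := [set M : cmap m | _].
have pos : 0 < 2 ^ (4 * n + 3 * h) * h ^ h.
  by rewrite muln_gt0 !expn_gt0 /=; case: h {em}.
case: (posnP m) => [m0|mpos].
  apply: (leq_trans (leq_imset_card (@iso_class m) V)); apply: (leq_trans (max_card _)).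
  rewrite card_prod /cmap /dart.
  by move: m0 {V} => ->; rewrite !card_Sn.
set N := 2 * m.
have Npos : 0 < N by rewrite /N; lia.
pose x0 : dart m := Ordinal Npos.
pose Codes := setX (Dset N h) [set: {ffun 'I_h -> 'I_(2 * h)}].
pose W := [set M' : cmap m | [exists c in Codes, @matchc N n h M'.1 M'.2 c.1.1 c.1.2 c.2]].
have eN : N = 2 * n.-1 + 2 * h by rewrite /N em; lia.
have sub : (@iso_class m) @: V \subset (@iso_class m) @: W.
  apply/subsetP=> _ /imsetP[[a s] + ->]; rewrite inE => /andP[cm /eqP nv].
  case/and3P: cm => /forallP fpf /forallP/(_ _)/eqP inv /forallP conn.
  have {}conn x y : connect (fun u v => (v == a u) || (v == s u)) x y.
    by have /forallP := conn x; apply.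
  have [P [BS [q [I full]]]] := explore inv x0 x0 conn.
  have en : n = (size BS).+1.
    have eP : #|porbits s| = (size BS).+1.
      rewrite -(iO I) /porbits; apply: eq_card => O.
      by apply/imsetP/imsetP => -[y _ ->]; exists y; rewrite ?inE ?full.
    rewrite -nv /nverts /= eP; lia.
  have [t [X [B [g mt]]]] := translate inv fpf I full en eN.
  apply/imsetP; exists ((a ^ t)%g, (s ^ t)%g); last by rewrite (iso_conj (a, s) t).
  rewrite inE; apply/existsP; exists ((X, B), g); rewrite mt andbT.
  rewrite !inE /=; by case/and4P: mt => -> _ -> _.
pose f (M' : cmap m) := [pick c in Codes | @matchc N n h M'.1 M'.2 c.1.1 c.1.2 c.2].
have fW M' : M' \in W -> exists2 c, f M' = Some c & @matchc N n h M'.1 M'.2 c.1.1 c.1.2 c.2.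
  rewrite inE /f => /existsP[c /andP[cC mc]].
  case: pickP => [c' /andP[_ mc'] | no]; first by exists c'.
  by have := no c; rewrite cC mc.
have fi : {in W &, injective f}.
  move=> M1 M2 M1W M2W e.
  have [c1 e1 m1] := fW _ M1W; have [c2 e2 m2] := fW _ M2W.
  move: m2; rewrite -e e1 in e2; case: e2 => <- m2.
  have [e1' e2'] := match_uniq eN m1 m2.
  by case: M1 M2 e1' e2' {M1W M2W e e1 m1 m2} => ? ? [? ?] /= -> ->.
have cW : #|W| <= #|Codes|.
  rewrite -(card_in_imset fi) -(card_imset Codes (@Some_inj _)).
  apply: subset_leq_card; apply/subsetP=> _ /imsetP[M MW ->].
  have [c fc mc] := fW _ MW; rewrite fc imset_f //.
  rewrite /f in fc; move: fc; case: pickP => [c' /andP[cC _] [<-] //| _ //].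
have cC : #|Codes| <= 2 ^ N * 2 ^ (N - 2 * h) * (2 * h) ^ h.
  by rewrite cardsX cardsT card_ffun !card_ord leq_mul2r card_Dset orbT.
apply: leq_trans (subset_leq_card sub) _.
apply: leq_trans (leq_imset_card _ _) _.
apply: leq_trans cW _; apply: leq_trans cC _.
rewrite expnMn mulnA -!expnD leq_mul2r; apply/orP; right.
apply: leq_pexp2l => //; rewrite /N; lia.
Qed.

Unset Implicit Arguments.
Set Strict Implicit.

Theorem lemma9 (n h : nat) :
  (1 <= n)%N -> ~~ odd h ->
  (num_unicellular n h./2 <= 2 ^ (4 * n + 3 * h) * h ^ h)%N.
Proof.
move=> n1 ev.
have em : uni_edges n h./2 = (n.-1 + h)%N.
  rewrite /uni_edges mul2n; have := odd_double_half h; rewrite (negbTE ev) add0n.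
  lia.
apply: leq_trans (main_bound n1 em); rewrite /num_unicellular.
apply: subset_leq_card; apply: imsetS; apply/subsetP=> M; rewrite !inE.
by case/andP=> /andP[/andP[-> ->] _] _.
Qed.
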